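(* Let $\mathcal{P}=(\{\mathcal{E}_k:k\in K\},\{M_0,M_1\})$ be a concurrent quantum program with $K=\{1,\dots,m\}$ on a Hilbert space $\mathcal{H}$ of finite dimension $d$, with initial density operator $\rho_0$. Let $\mathcal{G}=\sum_{i=0}^{d-1}\big(\sum_{k=1}^m\mathcal{F}_k\big)^i$ and, for each permutation $p=p_1p_2\cdots p_m\in P_K$, let $\mathcal{F}_p'=\mathcal{F}_{p_m}\circ\mathcal{G}\circ\mathcal{F}_{p_{m-1}}\circ\cdots\circ\mathcal{F}_{p_2}\circ\mathcal{G}\circ\mathcal{F}_{p_1}$. Let $M$ be the matrix representation of $\sum_{p\in P_K}\mathcal{F}'_p$. Then $\mathcal{P}$ with input $\rho_0$ terminates in the fair schedule $F$ if and only if $M^d(\rho_0\otimes I)|\Phi\rangle=0$, equivalently iff $\big(\sum_{p\in P_K}\mathcal{F}'_p\big)^d(\rho_0)=0$.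
   Context: $\mathcal{H}$ is a complex Hilbert space of finite dimension $d\ge1$ with orthonormal basis $\{|j\rangle\}$, and $|\Phi\rangle=\sum_j|j\rangle|j\rangle$. A super-operator is a completely positive trace-non-increasing linear map on operators on $\mathcal{H}$, with Kraus form $\mathcal{E}(\rho)=\sum_iE_i\rho E_i^\dagger$; its matrix representation is $\sum_iE_i\otimes E_i^*$ ($E^*$ entrywise complex conjugate), and for any CP linear map written in Kraus form the same definition applies. A concurrent quantum program is $\mathcal{P}=(\{\mathcal{E}_k:k\in K\},\{M_0,M_1\})$ with trace-preserving super-operators $\mathcal{E}_k$ and $M_0^\dagger M_0+M_1^\dagger M_1=I$. $\mathcal{F}_k(\rho)=\mathcal{E}_k(M_1\rho M_1^\dagger)$; for a finite string $f=s_1\cdots s_n$, $\mathcal{F}_f=\mathcal{F}_{s_n}\circ\cdots\circ\mathcal{F}_{s_1}$; powers denote iterated composition, the $0$th power the identity. For $s\in K^\omega$, $s[n]$ is its length-$n$ prefix. $\mathcal{P}$ with input $\rho_0$ terminates in a schedule $A\subseteq K^\omega$ if for every $s\in A$ there is $n\ge1$ with $\mathcal{F}_{s[n]}(\rho_0)=0$. $F$ is the set of infinite paths in which every $k\in K$ occurs infinitely often. $P_K$ is the set of permutations of $K$ as strings of length $m$. *)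

(* Defs.v *)
From HB Require Import structures.
From mathcomp Require Import all_boot all_order all_algebra all_fingroup all_field.
Set Implicit Arguments. Unset Strict Implicit. Unset Printing Implicit Defensive.
Import Order.TTheory GRing.Theory Num.Theory.
Local Open Scope ring_scope.

Definition cconj m n (A : 'M[algC]_(m, n)) : 'M[algC]_(m, n) := map_mx Num.conj A.
Definition adj m n (A : 'M[algC]_(m, n)) : 'M[algC]_(n, m) := (cconj A)^T.

Definition psd d (A : 'M[algC]_d) : Prop :=
  adj A = A /\ forall x : 'cV[algC]_d, 0 <= (adj x *m A *m x) 0 0.
Definition density d (rho : 'M[algC]_d) : Prop := psd rho /\ \tr rho = 1.

(* super-operators (CP maps) given in Kraus form: a list of Kraus operators *)
Definition superop d := seq 'M[algC]_d.
Definition so_app d (L : superop d) (rho : 'M[algC]_d) : 'M[algC]_d :=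
  \sum_(E <- L) E *m rho *m adj E.
(* so_comp f g = f o g *)
Definition so_comp d (f g : superop d) : superop d := [seq F *m G | F <- f, G <- g].
Definition so_id d : superop d := [:: 1%:M].
Definition so_pow d (f : superop d) (n : nat) : superop d := iter n (so_comp f) (so_id d).
Definition so_sum d (fs : seq (superop d)) : superop d := flatten fs.

Definition trace_preserving d (L : superop d) : Prop :=
  \sum_(E <- L) adj E *m E = 1%:M.

(* Kronecker product, indices of 'I_(m*n) identified with 'I_m * 'I_n via mxvec_index *)
Definition pidx m n (k : 'I_(m * n)) : 'I_m * 'I_n := enum_val (cast_ord (esym (mxvec_cast m n)) k).
Definition kron m1 n1 m2 n2 (A : 'M[algC]_(m1, n1)) (B : 'M[algC]_(m2, n2))
  : 'M[algC]_(m1 * m2, n1 * n2) :=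
  \matrix_(k, l) (A (pidx k).1 (pidx l).1 * B (pidx k).2 (pidx l).2).
(* |Phi> = sum_j |j>|j> *)
Definition Phi d : 'cV[algC]_(d * d) :=
  \col_k (if (pidx k).1 == (pidx k).2 then 1 else 0).
Definition matrep d (L : superop d) : 'M[algC]_(d * d) :=
  \sum_(E <- L) kron E (cconj E).
Definition mxpow n (A : 'M[algC]_n) (k : nat) : 'M[algC]_n := iter k (mulmx A) 1%:M.

(* the concurrent program: Es k = Kraus list of E_k, measurement {M0, M1} *)
Definition Fk d m (Es : 'I_m -> superop d) (M1 : 'M[algC]_d) (k : 'I_m) : superop d :=
  [seq E *m M1 | E <- Es k].   (* F_k(rho) = E_k(M1 rho M1^dag) *)

Definition Gop d m (Es : 'I_m -> superop d) M1 : superop d :=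
  so_sum [seq so_pow (so_sum [seq Fk Es M1 k | k <- enum 'I_m]) i | i <- iota 0 d].

(* F'_{p1...pn} = F_{pn} o G o ... o G o F_{p1} *)
Fixpoint Fprime_seq d m (Es : 'I_m -> superop d) M1 (s : seq 'I_m) : superop d :=
  match s with
  | [::] => so_id d
  | [:: k] => Fk Es M1 k
  | k :: s' => so_comp (Fprime_seq Es M1 s') (so_comp (Gop Es M1) (Fk Es M1 k))
  end.
Definition Fprime d m (Es : 'I_m -> superop d) M1 (p : {perm 'I_m}) : superop d :=
  Fprime_seq Es M1 [seq p i | i <- enum 'I_m].
Definition sumFprime d m (Es : 'I_m -> superop d) M1 : superop d :=
  so_sum [seq Fprime Es M1 p | p <- enum {perm 'I_m}].

(* F_{s[n]}(rho) = F_{s_{n-1}}( ... F_{s_0}(rho)) ; infinite paths s : nat -> K *)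
Fixpoint path_app d m (Es : 'I_m -> superop d) M1 (s : nat -> 'I_m) (n : nat)
  (rho : 'M[algC]_d) : 'M[algC]_d :=
  match n with
  | 0 => rho
  | n'.+1 => so_app (Fk Es M1 (s n')) (path_app Es M1 s n' rho)
  end.

Definition terminates_in d m (Es : 'I_m -> superop d) M1 (rho0 : 'M[algC]_d)
  (A : (nat -> 'I_m) -> Prop) : Prop :=
  forall s, A s -> exists n, (1 <= n)%N /\ path_app Es M1 s n rho0 = 0.

Definition fair m (s : nat -> 'I_m) : Prop :=
  forall k : 'I_m, forall N : nat, exists n, (N <= n)%N /\ s n = k.

(* Main.v *)
Require Import Defs.
From HB Require Import structures.
From mathcomp Require Import all_boot all_order all_algebra all_fingroup all_field.
From mathcomp Require Import zify ring.
Import Order.TTheory GRing.Theory Num.Theory.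
Local Open Scope ring_scope.
Set Implicit Arguments. Unset Strict Implicit. Unset Printing Implicit Defensive.

Section Sums.
Variable n : nat.
Lemma sumsP (I : eqType) (r : seq I) (P : pred I) (A : I -> 'M[algC]_n) m (B : 'M[algC]_(m,n)) :
  reflect (forall i, i \in r -> P i -> (A i <= B)%MS) (\sum_(i <- r | P i) A i <= B)%MS.
Proof.
apply: (iffP idP).
  elim: r => [|a r IH] //; rewrite big_cons => H i.
  rewrite in_cons => /orP [/eqP -> | ir] Pi.
    by move: H; rewrite Pi addsmx_sub => /andP [].
  apply: IH => //; move: H; case: (P a) => //.
  by rewrite addsmx_sub => /andP [_ H'].
elim: r => [|a r IH] H; first by rewrite big_nil sub0mx.
rewrite big_cons; case Pa: (P a); last by apply: IH => i ir; apply: H; rewrite in_cons ir orbT.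
rewrite addsmx_sub (H a (mem_head _ _) Pa) /=; apply: IH => i ir; apply: H; by rewrite in_cons ir orbT.
Qed.
Lemma sums_sup (I : eqType) (r : seq I) (P : pred I) (A : I -> 'M[algC]_n) m (C : 'M[algC]_(m,n)) i0 :
  i0 \in r -> P i0 -> (C <= A i0)%MS -> (C <= \sum_(i <- r | P i) A i)%MS.
Proof.
move=> ir Pi H; apply: submx_trans H _.
elim: r ir => [|a r IH] //; rewrite in_cons big_cons => /orP [/eqP <- | ir].
  by rewrite Pi addsmxSl.
case: (P a); last exact: IH.
apply: submx_trans (IH ir) _; exact: addsmxSr.
Qed.
End Sums.

Section Chain.
Variable d : nat.
Implicit Types X Y Z : 'M[algC]_d.
Variable phi : 'M[algC]_d -> 'M[algC]_d.
Hypothesis mono : forall X Y, (X <= Y)%MS -> (phi X <= phi Y)%MS.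
Hypothesis subadd : forall X Y, (phi (X + Y)%MS <= phi X + phi Y)%MS.
Hypothesis phi0 : (phi 0 <= (0:'M_d))%MS.

Lemma phi_sum (I : Type) (r : seq I) (P : pred I) (A : I -> 'M[algC]_d) :
  (phi (\sum_(i <- r | P i) A i)%MS <= \sum_(i <- r | P i) phi (A i))%MS.
Proof.
elim: r => [|a r IH]; first by rewrite !big_nil.
rewrite !big_cons; case: (P a) => //.
apply: submx_trans (subadd _ _) _; exact: addsmxS.
Qed.

Lemma iter_sum k (I : Type) (r : seq I) (P : pred I) (A : I -> 'M[algC]_d) :
  (iter k phi (\sum_(i <- r | P i) A i)%MS <= \sum_(i <- r | P i) iter k phi (A i))%MS.
Proof.
elim: k => [|k IH] /=; first exact: submx_refl.
apply: submx_trans (phi_sum _ _ _); exact: mono.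
Qed.

Lemma iter_mono n X Y : (X <= Y)%MS -> (iter n phi X <= iter n phi Y)%MS.
Proof. by move=> H; elim: n => //= n IH; apply: mono. Qed.

Lemma iter0 n : (iter n phi 0 <= (0:'M_d))%MS.
Proof.
elim: n => [|n IH] /=; first exact: submx_refl.
apply: submx_trans phi0; exact: mono.
Qed.

Lemma closure_iter X n : (0 < d)%N ->
  (iter n phi X <= \sum_(i < d) iter i phi X)%MS.
Proof.
move=> d0.
pose U j := (\sum_(i < j) iter i phi X)%MS.
have prop j : (iter j phi X <= U j)%MS -> (iter j.+1 phi X <= U j.+1)%MS.
  move=> H; rewrite iterS; apply: submx_trans (mono H) _.
  apply: submx_trans (phi_sum _ _ _) _.
  rewrite /U big_ord_recl /=; apply: submx_trans (addsmxSr _ _).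
  apply/sumsmx_subP => i _.
  apply: (sumsmx_sup i) => //; rewrite -iterS; exact: submx_refl.
have key j : (iter j phi X <= U j)%MS \/ (j <= \rank (U j))%N.
  elim: j => [|j [IH|IH]]; [by right | by left; apply: prop |].
  case H: (iter j phi X <= U j)%MS; first by left; apply: prop.
  right; have lt : (U j < U j.+1)%MS.
    rewrite ltmxE /U big_ord_recr /= addsmxSl /= addsmx_sub submx_refl /=.
    by rewrite H.
  exact: leq_ltn_trans IH (rank_ltmx lt).
have UdS : (phi (U d) <= U d)%MS.
  have: (iter d phi X <= U d)%MS.
    case: (key d) => // H.
    apply: submx_full; rewrite /row_full eqn_leq rank_leq_col; exact: H.
  move=> H; rewrite /U; apply: submx_trans (phi_sum _ _ _) _.
  apply/sumsmx_subP => i _.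
  case: (ltnP i.+1 d) => Hi.
    by apply: (sumsmx_sup (Ordinal Hi)) => //; rewrite -iterS submx_refl.
  have -> : nat_of_ord i = d.-1 by have := ltn_ord i; lia.
  by rewrite -iterS prednK.
elim: n => [|n IH].
  by apply: (sumsmx_sup (Ordinal d0)) => //=; exact: submx_refl.
rewrite iterS; exact: submx_trans (mono IH) UdS.
Qed.

Lemma nil_iter X n : iter n phi X = 0 -> iter d phi X = 0.
Proof.
move=> Hn; apply/eqP; rewrite -submx0.
case: (leqP n d) => Hnd.
  have -> : iter d phi X = iter (d - n) phi (iter n phi X) by rewrite -iterD subnK.
  rewrite Hn; exact: iter0.
pose W j := (\sum_(j <= i < n) iter i phi X)%MS.
have Wn j : (n <= j)%N -> W j = 0.
  by move=> H; rewrite /W big_geq.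
have WS j : (W j.+1 <= W j)%MS.
  rewrite /W; case: (ltnP j n) => H; last by rewrite big_geq ?sub0mx // ltnW.
  by rewrite (big_ltn H) addsmxSr.
have phiW j : (phi (W j) <= W j.+1)%MS.
  apply: submx_trans (phi_sum _ _ _) _.
  apply/sumsP => i Hi _; rewrite -iterS.
  case: (ltnP i.+1 n) => H.
    rewrite /W; apply: (sums_sup (i0 := i.+1)) => //.
      by rewrite mem_index_iota H andbT ltnS; move: Hi; rewrite mem_index_iota; case/andP.
  have -> : i.+1 = (i.+1 - n + n)%N by rewrite subnK.
  by rewrite iterD Hn; apply: submx_trans (iter0 _) (sub0mx _ _).
have Wphi j : (W j.+1 <= phi (W j))%MS.
  rewrite /W; apply/sumsP => i; rewrite mem_index_iota => /andP [Hi Hin] _.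
  have Hi' : (0 < i)%N by apply: leq_trans Hi.
  rewrite -(prednK Hi') iterS; apply: mono.
  apply: (sums_sup (i0 := i.-1)) => //.
  rewrite mem_index_iota; apply/andP; split; lia.
have stab j : (W j <= W j.+1)%MS -> W j = 0.
  move=> H.
  have H1 : (W j <= phi (W j))%MS by apply: submx_trans H (Wphi j).
  have H2 k : (iter k phi (W j) <= W (k + j)%N)%MS.
    elim: k => [|k IH]; first exact: submx_refl.
    rewrite iterS addSn; apply: submx_trans (phiW (k + j)%N); exact: mono.
  have H3 k : (W j <= iter k phi (W j))%MS.
    elim: k => [|k IH]; first exact: submx_refl.
    by rewrite iterS; apply: submx_trans H1 (mono IH).
  apply/eqP; rewrite -submx0; apply: submx_trans (H3 n) _.
  by have := H2 n; rewrite (Wn (n + j)%N) ?leq_addr.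
have rk j : (\rank (W j) + j <= d)%N \/ W j = 0.
  elim: j => [|j [IH|IH]]; first by left; rewrite addn0 rank_leq_col.
    case H: (W j <= W j.+1)%MS.
      by right; apply/eqP; rewrite -submx0 -(stab j H); apply: WS.
    left; have lt : (W j.+1 < W j)%MS by rewrite ltmxE WS H.
    have := rank_ltmx lt; lia.
  by right; apply/eqP; rewrite -submx0 -IH; apply: WS.
have Wd : W d = 0.
  case: (rk d) => // H; apply/eqP; rewrite -mxrank_eq0; apply/eqP; lia.
rewrite -Wd /W; apply: (sums_sup (i0 := d)) => //; first by rewrite mem_index_iota leqnn Hnd.
Qed.
End Chain.

Section App.
Variable d : nat.
Implicit Types X Y Z : 'M[algC]_d.
Implicit Types L f g : superop d.

Definition app L X : 'M[algC]_d := (\sum_(E <- L) X *m E^T)%MS.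

Lemma app_sup L X E : E \in L -> (X *m E^T <= app L X)%MS.
Proof. by move=> EL; apply: (sums_sup (i0 := E)). Qed.

Lemma app_least L X m (Z : 'M_(m, d)) :
  (forall E, E \in L -> (X *m E^T <= Z)%MS) -> (app L X <= Z)%MS.
Proof. by move=> H; apply/sumsP => E EL _; apply: H. Qed.

Lemma app_mono L X Y : (X <= Y)%MS -> (app L X <= app L Y)%MS.
Proof.
move=> H; apply: app_least => E EL; apply: submx_trans (app_sup _ EL).
exact: submxMr.
Qed.

Lemma app_subadd L X Y : (app L (X + Y)%MS <= app L X + app L Y)%MS.
Proof.
apply: app_least => E EL; rewrite addsmxMr; apply: addsmxS; exact: app_sup.
Qed.

Lemma app0 L : (app L 0 <= (0 : 'M_d))%MS.
Proof. by apply: app_least => E _; rewrite mul0mx submx_refl. Qed.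

Lemma app_sub L1 L2 X : {subset L1 <= L2} -> (app L1 X <= app L2 X)%MS.
Proof. by move=> H; apply: app_least => E EL; apply: app_sup; apply: H. Qed.

Lemma app_mulr g X (C : 'M_d) Z :
  (forall G, G \in g -> (X *m G^T *m C <= Z)%MS) -> (app g X *m C <= Z)%MS.
Proof.
rewrite /app; elim: g => [|G g IH] H; first by rewrite big_nil mul0mx sub0mx.
rewrite big_cons addsmxMr addsmx_sub H ?mem_head //=; apply: IH => G' HG'.
by apply: H; rewrite in_cons HG' orbT.
Qed.

Lemma app_comp1 f g X : (app (so_comp f g) X <= app f (app g X))%MS.
Proof.
apply: app_least => E /allpairsP [[F G] [/= HF HG ->]].
rewrite trmx_mul mulmxA; apply: submx_trans (app_sup _ HF).
by apply: submxMr; apply: app_sup.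
Qed.

Lemma app_comp2 f g X : (app f (app g X) <= app (so_comp f g) X)%MS.
Proof.
apply: app_least => F HF; apply: app_mulr => G HG.
rewrite -mulmxA -trmx_mul; apply: app_sup.
by apply/allpairsP; exists (F, G).
Qed.

Lemma app_id1 X : (app (so_id d) X <= X)%MS.
Proof. by apply: app_least => E; rewrite inE => /eqP ->; rewrite trmx1 mulmx1 submx_refl. Qed.

Lemma app_id2 X : (X <= app (so_id d) X)%MS.
Proof. by rewrite -{1}(mulmx1 X) -trmx1; apply: app_sup; rewrite mem_head. Qed.

End App.

Lemma adjE m n (A : 'M[algC]_(m, n)) i j : adj A i j = (A j i)^*.
Proof. by rewrite /adj /cconj !mxE. Qed.

Lemma adjM m n p (A : 'M[algC]_(m, n)) (B : 'M[algC]_(n, p)) : adj (A *m B) = adj B *m adj A.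
Proof. by rewrite /adj /cconj map_mxM trmx_mul. Qed.

Lemma adjK m n (A : 'M[algC]_(m, n)) : adj (adj A) = A.
Proof. by apply/matrixP => i j; rewrite !adjE conjCK. Qed.

Lemma adjB m n (A B : 'M[algC]_(m, n)) : adj (A - B) = adj A - adj B.
Proof. by apply/matrixP => i j; rewrite !adjE !mxE rmorphB. Qed.

Lemma adjZ m n a (A : 'M[algC]_(m, n)) : adj (a *: A) = a^* *: adj A.
Proof. by apply/matrixP => i j; rewrite !adjE !mxE rmorphM. Qed.

Lemma adj1 n : adj (1%:M : 'M[algC]_n) = 1%:M.
Proof. by rewrite /adj /cconj map_mx1 trmx1. Qed.

Lemma adj_sum m n (I : Type) (r : seq I) (F : I -> 'M[algC]_(m, n)) :
  adj (\sum_(i <- r) F i) = \sum_(i <- r) adj (F i).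
Proof.
elim: r => [|a r IH]; first by rewrite !big_nil; apply/matrixP => i j; rewrite adjE !mxE conjC0.
by rewrite !big_cons -IH; apply/matrixP => i j; rewrite !adjE !mxE rmorphD.
Qed.

Lemma nrm_ge0 n (z : 'cV[algC]_n) : 0 <= (adj z *m z) 0 0.
Proof.
rewrite mxE; apply: sumr_ge0 => i _; rewrite adjE mulrC; exact: mul_conjC_ge0.
Qed.

Lemma nrm_eq0 n (z : 'cV[algC]_n) : (adj z *m z) 0 0 = 0 -> z = 0.
Proof.
rewrite mxE => /eqP; rewrite psumr_eq0 => [/allP H|i _]; last first.
  by rewrite adjE mulrC; exact: mul_conjC_ge0.
apply/matrixP => i j; rewrite (ord1 j) mxE.
have := H i (mem_index_enum _); rewrite adjE mulrC mul_conjC_eq0 => /eqP //.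
Qed.

Section Psd.
Variable n : nat.
Variable rho : 'M[algC]_n.
Hypothesis Hr : psd rho.

Let Bf (u v : 'cV[algC]_n) := (adj u *m rho *m v) 0 0.

Lemma psd_null y : Bf y y = 0 -> rho *m y = 0.
Proof.
case: Hr => Hh Hp.
move=> Hy; set z := rho *m y.
set a := (adj z *m z) 0 0.
set b := Bf z z.
have a0 : 0 <= a := nrm_ge0 z.
have b0 : 0 <= b := Hp z.
set t := a / (b + 1).
have b1 : b + 1 != 0 by rewrite gt_eqF // ltr_wpDl.
have t0 : 0 <= t by rewrite divr_ge0 // addr_ge0.
have tc : t^* = t := geC0_conj t0.
have adjz : adj z = adj y *m rho by rewrite /z adjM Hh.
have e1 : Bf y z = a by rewrite /Bf /a adjz mulmxA.
have e2 : Bf z y = a by rewrite /Bf /a mulmxA.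
have H := Hp (y - t *: z).
have E0 : (adj (y - t *: z) *m rho *m (y - t *: z)) 0 0 = t * t * b - t * a - t * a.
  rewrite adjB adjZ tc !(mulmxBl, mulmxBr) -!scalemxAl -!scalemxAr.
  have -> : adj y *m rho *m y = (Bf y y)%:M by apply/matrixP => i j; rewrite (ord1 i) (ord1 j) [RHS]mxE eqxx mulr1n.
  have -> : adj y *m rho *m z = (Bf y z)%:M by apply/matrixP => i j; rewrite (ord1 i) (ord1 j) [RHS]mxE eqxx mulr1n.
  have -> : adj z *m rho *m y = (Bf z y)%:M by apply/matrixP => i j; rewrite (ord1 i) (ord1 j) [RHS]mxE eqxx mulr1n.
  have -> : adj z *m rho *m z = (Bf z z)%:M by apply/matrixP => i j; rewrite (ord1 i) (ord1 j) [RHS]mxE eqxx mulr1n.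
  rewrite !mxE Hy e1 e2 -/b /=.
  ring.
rewrite E0 in H.
have : a * a * (b + 2%:R) <= 0.
  have E : t * t * b - t * a - t * a = - (a * a * (b + 2%:R)) / ((b + 1) * (b + 1)).
    rewrite /t; field; exact: b1.
  rewrite E in H; rewrite -oppr_ge0.
  by rewrite pmulr_lge0 // in H; rewrite invr_gt0 mulr_gt0 // ltr_wpDl.
move=> H2.
have H3 : a * a * (b + 2%:R) = 0.
  apply/eqP; rewrite eq_le H2 mulr_ge0 // ?mulr_ge0 // addr_ge0 //.
move: H3 => /eqP; rewrite !mulf_eq0 orbb => /orP [/eqP a00|].
  by apply: nrm_eq0.
by rewrite gt_eqF // ltr_wpDl.
Qed.

End Psd.

Lemma so_app_eq0 n (L : superop n) rho : psd rho ->
  so_app L rho = 0 -> forall E, E \in L -> E *m rho = 0.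
Proof.
move=> Hr H0 E EL; have [Hh Hp] := Hr.
have K : rho *m adj E = 0.
  apply/matrixP => i j.
  have Hx : rho *m (adj E *m delta_mx j (0 : 'I_1)) = 0.
    apply: (psd_null Hr).
    set x := delta_mx j (0 : 'I_1).
    have := congr1 (fun M => (adj x *m M *m x) 0 0) H0.
    rewrite /so_app mulmx_sumr mulmx_suml summxE mulmx0 mul0mx mxE => /eqP.
    rewrite psumr_eq0; last first.
      move=> F _; have := Hp (adj F *m x); by rewrite adjM adjK !mulmxA.
    by move/allP/(_ E EL)/eqP <-; rewrite adjM adjK !mulmxA.
  move: Hx; rewrite mulmxA -colE => /matrixP/(_ i 0); rewrite !mxE => H.
  exact: H.
move: (congr1 (@adj n n) K); rewrite adjM Hh adjK => ->.
by apply/matrixP => i j; rewrite adjE !mxE conjC0.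
Qed.

Lemma so_app_eq0' n (L : superop n) rho :
  (forall E, E \in L -> E *m rho = 0) -> so_app L rho = 0.
Proof.
move=> H; rewrite /so_app big_seq big1 // => E EL; by rewrite H // mul0mx.
Qed.

Lemma app_rho n (L : superop n) rho : psd rho ->
  (so_app L rho = 0 <-> (app L rho^T <= (0 : 'M_n))%MS).
Proof.
move=> Hr; split => H.
  apply: app_least => E EL; by rewrite -trmx_mul (so_app_eq0 Hr H EL) trmx0 submx_refl.
apply: so_app_eq0' => E EL; apply/eqP; rewrite -trmx_eq0 trmx_mul -submx0.
exact: submx_trans (app_sup _ EL) H.
Qed.

Definition qidx m n (p : 'I_m * 'I_n) : 'I_(m * n) := cast_ord (mxvec_cast m n) (enum_rank p).

Lemma qidxK m n : cancel (@qidx m n) (@pidx m n).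
Proof. by move=> p; rewrite /pidx /qidx cast_ordK enum_rankK. Qed.

Lemma pidxK m n : cancel (@pidx m n) (@qidx m n).
Proof. by move=> k; rewrite /pidx /qidx enum_valK cast_ordKV. Qed.

Lemma sum_pidx m n (F : 'I_m -> 'I_n -> algC) :
  \sum_(l < m * n) F (pidx l).1 (pidx l).2 = \sum_a \sum_b F a b.
Proof.
rewrite pair_big /= (reindex (@qidx m n)) /=; last first.
  by exists (@pidx m n) => x _; [apply: qidxK | apply: pidxK].
by apply: eq_bigr => p _; rewrite qidxK.
Qed.

Definition vec n (X : 'M[algC]_n) : 'cV[algC]_(n * n) := kron X 1%:M *m Phi n.

Lemma vecE n (X : 'M[algC]_n) k : vec X k 0 = X (pidx k).1 (pidx k).2.
Proof.
rewrite /vec mxE.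
under eq_bigr => l _ do rewrite /kron /Phi !mxE.
rewrite (sum_pidx (fun a b => X (pidx k).1 a * (((pidx k).2 == b)%:R) * (if a == b then 1 else 0))).
set k2 := (pidx k).2; set k1 := (pidx k).1.
have inner a : \sum_b X k1 a * (k2 == b)%:R * (if a == b then 1 else 0) =
    if a == k2 then X k1 a else 0.
  rewrite (bigD1 k2) //= big1 => [|b /negPf Hb]; last by rewrite eq_sym Hb mulr0 mul0r.
  by rewrite eqxx mulr1 addr0; case: (a == k2); rewrite ?mulr1 ?mulr0.
under eq_bigr => a _ do rewrite inner.
rewrite (bigD1 k2) //= eqxx big1 ?addr0 // => a /negPf -> //.
Qed.

Lemma vec_inj n (X : 'M[algC]_n) : vec X = 0 -> X = 0.
Proof.
move=> H; apply/matrixP => a b.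
have := vecE X (qidx (a, b)); rewrite H qidxK !mxE /= => <-; done.
Qed.

Lemma kron_vec n (A B X : 'M[algC]_n) : kron A B *m vec X = vec (A *m X *m B^T).
Proof.
apply/matrixP => k j; rewrite (ord1 j) vecE mxE.
under eq_bigr => l _ do rewrite vecE /kron mxE.
rewrite (sum_pidx (fun a b => A (pidx k).1 a * B (pidx k).2 b * X a b)).
rewrite mxE; under [RHS]eq_bigr => b _ do rewrite mxE mxE mulr_suml.
rewrite exchange_big /=; apply: eq_bigr => a _; apply: eq_bigr => b _.
by ring.
Qed.

Lemma so_app_comp n (f g : superop n) X : so_app (so_comp f g) X = so_app f (so_app g X).
Proof.
rewrite /so_app /so_comp big_allpairs_dep; apply: eq_bigr => F _.
rewrite mulmx_sumr mulmx_suml; apply: eq_bigr => G _.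
by rewrite adjM !mulmxA.
Qed.

Lemma vec_so_app n (L : superop n) X : matrep L *m vec X = vec (so_app L X).
Proof.
rewrite /matrep /so_app mulmx_suml.
under eq_bigr => E _ do rewrite kron_vec.
apply/matrixP => k j; rewrite (ord1 j) summxE vecE summxE.
by apply: eq_bigr => E _; rewrite vecE.
Qed.

Lemma vec_pow n (L : superop n) X k :
  mxpow (matrep L) k *m vec X = vec (so_app (so_pow L k) X).
Proof.
elim: k => [|k IH].
  rewrite /mxpow /so_pow /= mul1mx; congr vec.
  by rewrite /so_app /so_id big_seq1 adj1 mulmx1 mul1mx.
by rewrite /mxpow /so_pow /= -mulmxA -/(mxpow _ _) IH vec_so_app so_app_comp.
Qed.

Section Main.
Variables (d m : nat) (Es : 'I_m -> superop d) (M1 : 'M[algC]_d).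
Hypothesis d0 : (0 < d)%N.

Let fk k := Fk Es M1 k.
Let Fall := so_sum [seq fk k | k <- enum 'I_m].
Let phi := app Fall.
Let Gs := Gop Es M1.
Let Sig := sumFprime Es M1.
Let phiS := app Sig.

Lemma appH L : [/\ forall X Y, (X <= Y)%MS -> (app L X <= app L Y)%MS,
   forall X Y, (app L (X + Y)%MS <= app L X + app L Y)%MS &
   (app L 0 <= (0 : 'M_d))%MS].
Proof. split; [exact: app_mono | exact: app_subadd | exact: app0]. Qed.

Lemma fk_Fall k : {subset fk k <= Fall}.
Proof. by move=> E EK; apply/flattenP; exists (fk k) => //; apply: map_f; rewrite mem_enum. Qed.

Lemma pow_app i Y : (iter i phi Y <= app (so_pow Fall i) Y)%MS.
Proof.
elim: i => [|i IH]; first exact: app_id2.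
rewrite iterS; apply: submx_trans (app_mono _ IH) _; exact: app_comp2.
Qed.

Lemma iter_G n Y : (iter n phi Y <= app Gs Y)%MS.
Proof.
have [h1 h2 h3] := appH Fall.
apply: submx_trans (closure_iter h1 h2 h3 _ _ d0) _.
apply/sumsmx_subP => i _; apply: submx_trans (pow_app _ _) _.
apply: app_sub => E HE; apply/flattenP; exists (so_pow Fall i) => //.
by apply: map_f; rewrite mem_iota add0n ltn_ord.
Qed.

Fixpoint pseg (s : nat -> 'I_m) N n Y := match n with
  | 0 => Y | n'.+1 => app (fk (s (N + n')%N)) (pseg s N n' Y) end.

Lemma psegD s N a b Y : pseg s N (a + b) Y = pseg s (N + a) b (pseg s N a Y).
Proof. by elim: b => [|b IH] /=; rewrite ?addn0 // addnS /= IH addnA. Qed.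

Lemma pseg_mono s N n X Y : (X <= Y)%MS -> (pseg s N n X <= pseg s N n Y)%MS.
Proof. by move=> H; elim: n => //= n IH; apply: app_mono. Qed.

Lemma pseg_iter s N n Y : (pseg s N n Y <= iter n phi Y)%MS.
Proof.
elim: n => [|n IH] /=; first exact: submx_refl.
apply: submx_trans (app_sub _ (@fk_Fall _)) _; exact: app_mono.
Qed.

Lemma pseg_G s N n Y : (pseg s N n Y <= app Gs Y)%MS.
Proof. exact: submx_trans (pseg_iter _ _ _ _) (iter_G _ _). Qed.

Lemma block (s : nat -> 'I_m) : fair s -> forall q k N, s N = k ->
  exists L, forall Y, (pseg s N L.+1 Y <= app (Fprime_seq Es M1 (k :: q)) Y)%MS.
Proof.
move=> fs; elim => [|k' q IH] k N sN.
  by exists 0%N => Y /=; rewrite addn0 sN; exact: submx_refl.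
have [N1 [HN1 sN1]] := fs k' N.+1.
have [L HL] := IH k' N1 sN1.
exists (N1 - N + L)%N => Y.
have E1 : (N1 - N + L).+1 = (1 + ((N1 - N.+1) + L.+1))%N by lia.
rewrite E1 psegD psegD.
have -> : (N + 1 + (N1 - N.+1))%N = N1 by lia.
have -> : pseg s N 1 Y = app (fk k) Y by rewrite /= addn0 sN.
apply: submx_trans (HL _) _.
have -> : Fprime_seq Es M1 [:: k, k' & q] =
  so_comp (Fprime_seq Es M1 (k' :: q)) (so_comp Gs (fk k)) by [].
apply: submx_trans _ (app_comp2 _ _ _); apply: app_mono.
apply: submx_trans _ (app_comp2 _ _ _); exact: pseg_G.
Qed.

Hypothesis m0 : (0 < m)%N.

Lemma Fprime_Sig p X : (app (Fprime Es M1 p) X <= phiS X)%MS.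
Proof.
by apply: app_sub => E HE; apply/flattenP; exists (Fprime Es M1 p) => //; apply: map_f; rewrite mem_enum.
Qed.

Lemma dir1 s S0 : fair s -> (iter d phiS S0 <= (0 : 'M_d))%MS ->
  exists n, (1 <= n)%N /\ (pseg s 0 n S0 <= (0 : 'M_d))%MS.
Proof.
move=> fs H0.
have claim t : exists n, (pseg s 0 n S0 <= iter t phiS S0)%MS.
  elim: t => [|t [n Hn]]; first by exists 0%N; exact: submx_refl.
  case En: (enum 'I_m) => [|h tl].
    by move: (size_enum_ord m); rewrite En /=; lia.
  pose p := tperm h (s n).
  have [L HL] := @block s fs (map p tl) (s n) n (erefl _).
  exists (n + L.+1)%N; rewrite psegD add0n.
  apply: submx_trans (HL _) _.
  have -> : Fprime_seq Es M1 (s n :: [seq p i | i <- tl]) = Fprime Es M1 p.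
    by rewrite /Fprime En /= tpermL.
  apply: submx_trans (Fprime_Sig _ _) _; rewrite iterS.
  apply: submx_trans (app_mono _ Hn) _; exact: submx_refl.
have [n Hn] := claim d.
exists n.+1; split => //=.
apply: submx_trans (app_mono _ (submx_trans Hn H0)) _; exact: app0.
Qed.

Definition Good Z := iter d phiS Z != 0.

Lemma good_all Z : Good Z -> forall t, iter t phiS Z != 0.
Proof.
have [h1 h2 h3] := appH Sig.
move=> H t; apply/negP => /eqP Ht; move/negP: H; apply; apply/eqP.
exact: (nil_iter h1 h2 h3 Ht).
Qed.

Lemma good_mono Z Z' : (Z <= Z')%MS -> Good Z -> Good Z'.
Proof.
have [h1 h2 h3] := appH Sig.
move=> HZ; apply: contra => /eqP H; rewrite -submx0.
apply: submx_trans (iter_mono h1 d HZ) _; rewrite H submx_refl //.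
Qed.

Lemma good0 : ~~ Good 0.
Proof.
have [h1 h2 h3] := appH Sig.
by rewrite /Good negbK -submx0; exact: iter0.
Qed.

Lemma good_ne0 Z : Good Z -> Z != 0.
Proof. by move=> H; exact: (good_all H 0). Qed.

Lemma good_app0 L Z : Good (app L Z) -> Z != 0.
Proof.
move=> H; apply/negP => /eqP HZ; subst Z.
have : Good 0 by apply: good_mono H; exact: app0.
by rewrite (negbTE good0).
Qed.

Lemma good_step Z : Good Z -> Good (phiS Z).
Proof. by move=> H; rewrite /Good -iterSr; exact: good_all. Qed.

Lemma good_pick L Z : Good (app L Z) -> exists2 E, E \in L & Good (Z *m E^T).
Proof.
have [h1 h2 h3] := appH Sig.
case: (boolP (has (fun E => Good (Z *m E^T)) L)) => [/hasP [E EL H] _| /hasPn H].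
  by exists E.
move=> HG; exfalso; move: HG; rewrite /Good; apply/negP; rewrite negbK -submx0.
apply: submx_trans (iter_sum h1 h2 h3 d _ _ _) _.
apply/sumsP => E EL _; have := H E EL; rewrite /Good negbK submx0 //.
Qed.

Fixpoint wlist (w : seq 'I_m) : superop d :=
  if w is k :: w' then so_comp (wlist w') (fk k) else so_id d.

Lemma wl_cat w1 w2 F G : F \in wlist w2 -> G \in wlist w1 -> F *m G \in wlist (w1 ++ w2).
Proof.
elim: w1 G => [|k w1 IH] G HF /=; first by rewrite inE => /eqP ->; rewrite mulmx1.
move/allpairsP => [[A B] [/= HA HB ->]]; rewrite mulmxA.
apply/allpairsP; exists (F *m A, B); split => //; exact: IH.
Qed.

Lemma wl1 k E : E \in fk k -> E \in wlist [:: k].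
Proof. by move=> HE; apply/allpairsP; exists (1%:M, E); rewrite mem_head mul1mx. Qed.

Lemma pow_wl i E : E \in so_pow Fall i -> exists w, E \in wlist w.
Proof.
elim: i E => [|i IH] E /=; first by exists [::].
move/allpairsP => [[A B] [/= HA HB ->]]; have [w Hw] := IH _ HB.
move/flattenP: HA => [f /mapP [k _ ->] HA].
exists (w ++ [:: k]); apply: wl_cat => //; exact: wl1.
Qed.

Lemma G_wl E : E \in Gs -> exists w, E \in wlist w.
Proof. by move/flattenP => [f /mapP [i _ ->] HE]; exact: pow_wl HE. Qed.

Lemma Fp_wl q : forall k E, E \in Fprime_seq Es M1 (k :: q) ->
  exists w, [/\ E \in wlist w, {subset k :: q <= w} & w != [::]].
Proof.
elim: q => [|k' q IH] k E.
  by move=> HE; exists [:: k]; split => //; exact: wl1.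
change (E \in so_comp (Fprime_seq Es M1 (k' :: q)) (so_comp Gs (fk k)) ->
  exists w, [/\ E \in wlist w, {subset [:: k, k' & q] <= w} & w != [::]]).
move/allpairsP => [[A B] [/= HA HB ->]]; move/allpairsP: HB => [[C D] [/= HC HD ->]].
have [w1 [H1 S1 _]] := IH _ _ HA; have [w2 H2] := G_wl HC.
exists (([:: k] ++ w2) ++ w1); split => //.
  by apply: wl_cat => //; apply: wl_cat => //; exact: wl1.
move=> x; rewrite in_cons => /orP [/eqP ->|Hx]; first by rewrite !mem_cat mem_head.
by rewrite mem_cat (S1 x Hx) orbT.
Qed.

Lemma Sig_wl E : E \in Sig -> exists w, [/\ E \in wlist w, forall k, k \in w & w != [::]].
Proof.
move/flattenP => [f /mapP [p _ ->]].
rewrite /Fprime; case En: (enum 'I_m) => [|h tl].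
  by move: (size_enum_ord m); rewrite En /=; lia.
move=> HE; have [w [H1 S1 H3]] := Fp_wl HE; exists w; split => // k.
apply: S1; rewrite -[k](permKV p); change (p ((p^-1)%g k) \in map p (h :: tl)).
by rewrite -En; apply: map_f; rewrite mem_enum.
Qed.

Lemma next_ex Y : exists w : seq 'I_m, Good Y ==>
  [&& all (fun k => k \in w) (enum 'I_m), w != [::] & Good (app (wlist w) Y)].
Proof.
case: (boolP (Good Y)) => HY; last by exists [::].
have [E ES HE] := good_pick (good_step HY).
have [w [H1 H2 H3]] := Sig_wl ES.
exists w; rewrite /= H3 /=; apply/andP; split; first by apply/allP => k _.
by apply: good_mono HE; exact: app_sup.
Qed.

Definition next Y := xchoose (next_ex Y).

Lemma nextP Y : Good Y -> [/\ forall k, k \in next Y, next Y != [::] & Good (app (wlist (next Y)) Y)].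
Proof.
move=> HY; have := xchooseP (next_ex Y); rewrite -/(next Y) => /implyP/(_ HY)/and3P [/allP H1 H2 H3].
by split => // k; apply: H1; rewrite mem_enum.
Qed.

Variable S0 : 'M[algC]_d.
Hypothesis HS0 : Good S0.
Let k0 : 'I_m := Ordinal m0.

Fixpoint st n : 'M[algC]_d * seq 'I_m := match n with
  | 0 => (S0, next S0)
  | n'.+1 => let: (Y, r) := st n' in
             let Y' := app (fk (head k0 r)) Y in
             if behead r == [::] then (Y', next Y') else (Y', behead r) end.

Definition sq n := head k0 (st n).2.

Lemma st_S1 n : (st n.+1).1 = app (fk (sq n)) (st n).1.
Proof. by rewrite /sq /=; case: (st n) => Y r /=; case: ifP. Qed.

Lemma st_S2 n : (st n.+1).2 =
  if behead (st n).2 == [::] then next (st n.+1).1 else behead (st n).2.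
Proof. by rewrite /=; case: (st n) => Y r /=; case: ifP. Qed.

Lemma st_fst n : (st n).1 = pseg sq 0 n S0.
Proof. by elim: n => [|n IH] //; rewrite st_S1 IH /= add0n. Qed.

Lemma Inv n : (st n).2 != [::] /\ Good (app (wlist (st n).2) (st n).1).
Proof.
elim: n => [|n [Hr HG]]; first by have [_ H2 H3] := nextP HS0.
rewrite st_S2 st_S1 /sq.
case: (st n) Hr HG => Y [//|k r'] _ HG /=.
case: ifP => [/eqP Er'|/negbT Hr'].
  subst r'.
  have HY : Good (app (fk k) Y).
    apply: good_mono HG; apply: submx_trans (app_comp1 _ _ _) _; exact: app_id1.
  by have [_ H2 H3] := nextP HY.
split => //; apply: good_mono HG; exact: app_comp1.
Qed.

Lemma st_ne0 n : pseg sq 0 n S0 != 0.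
Proof. by rewrite -st_fst; have [_ H] := Inv n; exact: good_app0 H. Qed.

Lemma fresh_S n : behead (st n).2 == [::] ->
  (st n.+1).2 = next (st n.+1).1 /\ Good (st n.+1).1.
Proof.
move=> Hb; rewrite st_S2 Hb; split => //.
have [Hr HG] := Inv n; rewrite st_S1 /sq.
move: Hb Hr HG; case: (st n).2 => [//|k [|//]] _ _ HG /=.
apply: good_mono HG; apply: submx_trans (app_comp1 _ _ _) _; exact: app_id1.
Qed.

Lemma F1 j n : (size (st n).2 <= j.+1)%N ->
  exists n', (n < n')%N /\ ((st n').2 = next (st n').1 /\ Good (st n').1).
Proof.
elim: j n => [|j IH] n Hs.
  exists n.+1; split => //; apply: fresh_S.
  by rewrite -size_eq0 size_behead; move: Hs; case: (size _) => [|[]].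
case: (boolP (behead (st n).2 == [::])) => Hb.
  by exists n.+1; split => //; apply: fresh_S.
have Hs' : (size (st n.+1).2 <= j.+1)%N.
  by rewrite st_S2 (negbTE Hb) size_behead; move: Hs; case: (size _).
have [n' [H1 H2]] := IH n.+1 Hs'.
by exists n'; split => //; lia.
Qed.

Lemma F2 i n : (i < size (st n).2)%N -> (st (n + i)).2 = drop i (st n).2.
Proof.
elim: i => [|i IH] H; first by rewrite addn0 drop0.
rewrite addnS st_S2 IH ?(ltnW H) //.
have -> : behead (drop i (st n).2) = drop i.+1 (st n).2 by rewrite -drop1 drop_drop add1n.
by rewrite -size_eq0 size_drop subn_eq0 leqNgt H.
Qed.

Lemma sq_fair : fair sq.
Proof.
move=> k N.
have [n' [Hn' [Hfr HG]]] := @F1 (size (st N).2) N (leqnSn _).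
have [Hall _ _] := nextP HG; rewrite -Hfr in Hall.
have Hi : (index k (st n').2 < size (st n').2)%N by rewrite index_mem.
exists (n' + index k (st n').2)%N; split; first lia.
by rewrite /sq F2 // -nth0 nth_drop addn0 nth_index.
Qed.

End Main.

Lemma so_app_id n (X : 'M[algC]_n) : so_app (so_id n) X = X.
Proof. by rewrite /so_app /so_id big_seq1 adj1 mulmx1 mul1mx. Qed.

Lemma vec0 n : vec (0 : 'M[algC]_n) = 0.
Proof. by apply/matrixP => k j; rewrite (ord1 j) vecE !mxE. Qed.

Lemma pow_iter n (L : superop n) k X :
  (app (so_pow L k) X <= iter k (app L) X)%MS /\ (iter k (app L) X <= app (so_pow L k) X)%MS.
Proof.
elim: k => [|k [IH1 IH2]]; first by split; [exact: app_id1 | exact: app_id2].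
rewrite iterS; split.
  apply: submx_trans (app_comp1 _ _ _) _; exact: app_mono.
apply: submx_trans (app_mono _ IH2) _; exact: app_comp2.
Qed.

Section Glue.
Variables (d m : nat) (Es : 'I_m -> superop d) (M1 : 'M[algC]_d).

Fixpoint wl (s : nat -> 'I_m) n : superop d :=
  if n is n'.+1 then so_comp (Fk Es M1 (s n')) (wl s n') else so_id d.

Lemma path_wl s n rho : path_app Es M1 s n rho = so_app (wl s n) rho.
Proof. by elim: n => [|n IH] /=; rewrite ?so_app_id // so_app_comp IH. Qed.

Lemma wl_pseg s n X :
  (app (wl s n) X <= pseg Es M1 s 0 n X)%MS /\ (pseg Es M1 s 0 n X <= app (wl s n) X)%MS.
Proof.
elim: n => [|n [IH1 IH2]]; first by split; [exact: app_id1 | exact: app_id2].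
rewrite /= add0n; split.
  apply: submx_trans (app_comp1 _ _ _) _; exact: app_mono.
apply: submx_trans (app_mono _ IH2) _; exact: app_comp2.
Qed.

End Glue.

Unset Implicit Arguments.

Theorem mainTheorem8 (d m : nat) (Es : 'I_m -> superop d) (M0 M1 : 'M[algC]_d)
  (rho0 : 'M[algC]_d) :
  (0 < d)%N -> (0 < m)%N ->
  (forall k, trace_preserving (Es k)) ->
  adj M0 *m M0 + adj M1 *m M1 = 1%:M ->
  density rho0 ->
  (terminates_in Es M1 rho0 (@fair m) <->
     mxpow (matrep (sumFprime Es M1)) d *m (kron rho0 (1%:M : 'M[algC]_d) *m Phi d) = 0)
  /\
  (terminates_in Es M1 rho0 (@fair m) <->
     so_app (so_pow (sumFprime Es M1) d) rho0 = 0).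
Proof.
move=> d0 m0 _ _ [Hr _].
set S0 := rho0^T.
set Sig := sumFprime Es M1.
have key : terminates_in Es M1 rho0 (@fair m) <-> (iter d (app Sig) S0 <= (0 : 'M_d))%MS.
  split.
    move=> Ht; case: (boolP (iter d (app Sig) S0 <= (0 : 'M_d))%MS) => // HG.
    have HG' : Good Es M1 S0 by rewrite /Good -submx0.
    have [n [n1 Hn]] := Ht _ (sq_fair d0 m0 HG').
    have := st_ne0 d0 m0 HG' n; rewrite -submx0; apply: contraNT => _.
    have [_ H2] := wl_pseg Es M1 (sq Es M1 d0 m0 S0) n S0.
    apply: submx_trans H2 _; apply/(app_rho _ Hr); by rewrite -path_wl.
  move=> H0 s fs; have [n [n1 Hn]] := dir1 d0 m0 fs H0.
  exists n; split => //; rewrite path_wl; apply/(app_rho _ Hr).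
  have [H2 _] := wl_pseg Es M1 s n S0; exact: submx_trans H2 Hn.
have key2 : so_app (so_pow Sig d) rho0 = 0 <-> (iter d (app Sig) S0 <= (0 : 'M_d))%MS.
  rewrite (app_rho _ Hr); have [H1 H2] := pow_iter Sig d S0; split => H.
    exact: submx_trans H2 H.
  exact: submx_trans H1 H.
have key3 : mxpow (matrep Sig) d *m (kron rho0 (1%:M : 'M[algC]_d) *m Phi d) = 0 <->
   so_app (so_pow Sig d) rho0 = 0.
  rewrite -/(vec rho0) vec_pow; split; first exact: vec_inj.
  by move=> ->; rewrite vec0.
split; [rewrite key3 | ]; rewrite key key2 //.
Qed.
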